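(* For integers $k\ge2$, let $F_k$ be the non-abelian free group of rank $k$. Then the true prosoluble completions $P\mathcal{S}(F_k)$, $k\ge 2$, are pairwise non-isomorphic (as topological groups).
   Context: For a group $\Gamma$, the true prosoluble completion $P\mathcal{S}(\Gamma)$ is the completion of $\Gamma/\bigcap N$ for the topology whose basis of neighbourhoods of the identity consists of the images of the normal subgroups $N$ of $\Gamma$ with $\Gamma/N$ soluble; equivalently it is the inverse limit $\varprojlim\Gamma/N$ over such $N$, with the inverse limit topology. *)

(* Defs.v *)
From Stdlib Require List.
From mathcomp Require Import all_boot.
Set Implicit Arguments. Unset Strict Implicit. Unset Printing Implicit Defensive.

Record grp := Grp {
  gcar : Type;
  gset : gcar -> Prop;
  gmul : gcar -> gcar -> gcar;
  ginv : gcar -> gcar;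
  gone : gcar }.

Definition subset_of {T : Type} (A B : T -> Prop) := forall x, A x -> B x.

Section GroupNotions.
Variable G : grp.
Local Notation T := (@gcar G).
Local Notation S := (@gset G).
Local Notation mul := (@gmul G).
Local Notation inv := (@ginv G).

Definition is_subgroup (H : T -> Prop) :=
  subset_of H S /\ H (@gone G) /\
  (forall a b, H a -> H b -> H (mul a b)) /\ (forall a, H a -> H (inv a)).

Definition is_normal (N : T -> Prop) :=
  is_subgroup N /\ forall g n, S g -> N n -> N (mul (mul (inv g) n) g).

Definition gen (A : T -> Prop) : T -> Prop :=
  fun x => forall H, is_subgroup H -> subset_of A H -> H x.

Definition commg (a b : T) := mul (mul (inv a) (inv b)) (mul a b).

Definition derived_sub (H : T -> Prop) : T -> Prop :=
  gen (fun x => exists a b, H a /\ H b /\ x = commg a b).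

Definition derived (n : nat) : T -> Prop := iter n derived_sub S.

(* N normal with G/N soluble: the n-th derived subgroup of G/N, which is the
   image of G^(n), is trivial for some n, i.e. G^(n) <= N. *)
Definition soluble_quotient (N : T -> Prop) :=
  is_normal N /\ exists n, subset_of (derived n) N.

Definition lcoset (g : T) (N : T -> Prop) : T -> Prop :=
  fun x => exists n, N n /\ x = mul g n.

(* Elements of the inverse limit  lim_{N} G/N  (N ranging over the normal
   subgroups with soluble quotient), encoded as families x : N |-> x N of
   cosets; outside the index set the family is the empty set (normalisation). *)
Definition PS_carrier (x : (T -> Prop) -> (T -> Prop)) :=
  (forall N, soluble_quotient N -> exists g, S g /\ x N = lcoset g N) /\
  (forall N, ~ soluble_quotient N -> x N = (fun _ => False)) /\
  (forall M N, soluble_quotient M -> soluble_quotient N ->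
     subset_of M N -> subset_of (x M) (x N)).

Definition PS_mul (x y : (T -> Prop) -> (T -> Prop)) : (T -> Prop) -> (T -> Prop) :=
  fun N z => exists a b, x N a /\ y N b /\ z = mul a b.

Definition agree_on (L : list (T -> Prop)) (x y : (T -> Prop) -> (T -> Prop)) :=
  forall N, List.In N L -> x N = y N.

End GroupNotions.

Definition PSel (G : grp) := (gcar G -> Prop) -> (gcar G -> Prop).

(* Continuity of f : PS(G) -> PS(H) for the inverse limit topologies (subspace
   of the product of the discrete quotients): the preimage of every subbasic
   open set {y | y N = f x N} contains a basic open neighbourhood of x. *)
Definition PS_continuous (G H : grp) (f : PSel G -> PSel H) :=
  forall x, PS_carrier x -> forall N, soluble_quotient N ->
    exists L : list (gcar G -> Prop),
      (forall M, List.In M L -> soluble_quotient M) /\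
      forall y, PS_carrier y -> agree_on L x y -> f y N = f x N.

Definition PS_isomorphic (G H : grp) :=
  exists (f : PSel G -> PSel H) (g : PSel H -> PSel G),
    (forall x, PS_carrier x -> PS_carrier (f x)) /\
    (forall y, PS_carrier y -> PS_carrier (g y)) /\
    (forall x, PS_carrier x -> g (f x) = x) /\
    (forall y, PS_carrier y -> f (g y) = y) /\
    (forall x y, PS_carrier x -> PS_carrier y -> f (PS_mul x y) = PS_mul (f x) (f y)) /\
    PS_continuous f /\ PS_continuous g.

(* The free group of rank k: reduced words in the letters x_i^{+-1}
   (letter (i, true) = x_i, (i, false) = x_i^-1), product = free reduction of
   the concatenation. *)
Definition letter (k : nat) := ('I_k * bool)%type.

Definition cancels {k} (a b : letter k) := (a.1 == b.1) && (a.2 != b.2).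

Fixpoint reducedb {k} (w : seq (letter k)) : bool :=
  match w with
  | a :: ((b :: _) as t) => ~~ cancels a b && reducedb t
  | _ => true
  end.

Definition reduce {k} (w : seq (letter k)) : seq (letter k) :=
  foldr (fun a acc => match acc with
                      | b :: t => if cancels a b then t else a :: acc
                      | [::] => [:: a] end) [::] w.

Definition free_group (k : nat) : grp :=
  @Grp (seq (letter k)) (fun w => reducedb w)
       (fun u v => reduce (u ++ v))
       (fun u => rev (map (fun a => (a.1, ~~ a.2)) u))
       [::].

(* Main.v *)
Require Import Defs.
From Stdlib Require List.
From Stdlib Require Import ClassicalEpsilon FunctionalExtensionality PropExtensionality.
From mathcomp Require Import all_boot.
Set Implicit Arguments. Unset Strict Implicit. Unset Printing Implicit Defensive.

Section Words.
Variable k : nat.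
Local Notation L := (letter k).
Local Notation W := (seq (letter k)).

Definition step (a : L) (acc : W) : W :=
  match acc with b :: t => if cancels a b then t else a :: acc | [::] => [:: a] end.
Definition R (t w : W) := foldr step t w.
Lemma reduceE (w : W) : reduce w = R [::] w. Proof. by []. Qed.
Definition flipl (a : L) : L := (a.1, ~~ a.2).

Lemma cancelsP (a b : L) : cancels a b -> b = flipl a.
Proof. case: a b => [i s] [j t]; rewrite /cancels /flipl /=.
case/andP => /eqP ->; by case: s; case: t. Qed.
Lemma cancels_flip (a : L) : cancels a (flipl a).
Proof. by rewrite /cancels /= eqxx; case: a.2. Qed.
Lemma cancels_flipK (a : L) : flipl (flipl a) = a.
Proof. by case: a => i []. Qed.

Lemma reducedE (w : W) : reducedb w = sorted (fun x y => ~~ cancels x y) w.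
Proof.
case: w => // a w; elim: w a => // b t IH a.
rewrite -[reducedb _]/(~~ cancels a b && reducedb (b::t)) IH; by [].
Qed.

Lemma reduced_tail (a : L) w : reducedb (a :: w) -> reducedb w.
Proof. by case: w => //= b t /andP[]. Qed.

Lemma reduced_step a (s : W) : reducedb s -> reducedb (step a s).
Proof.
case: s => [|b t] //= H; case: ifP => cab /=; first exact: reduced_tail H.
by rewrite cab.
Qed.

Lemma reducedR t (w : W) : reducedb t -> reducedb (R t w).
Proof. move=> Ht; elim: w => //= a w IH; exact: reduced_step. Qed.

Lemma reduce_reduced (w : W) : reducedb (reduce w).
Proof. exact: reducedR. Qed.

Lemma R_step t a (s : W) : reducedb t -> R t (step a s) = step a (R t s).
Proof.
move=> Ht; case: s => [|b s'] //=; case: ifP => cab //=.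
have := reducedR s' Ht; case: (R t s') => [|c r] /=; first by rewrite cab.
move=> Hr; case: ifP => cbc; last by rewrite /= cab.
have eca : c = a by rewrite (cancelsP cbc) (cancelsP cab) cancels_flipK.
rewrite eca in Hr *.
case: r Hr => [|d r] //= /andP[Hd _]; by rewrite (negbTE Hd).
Qed.

Lemma R_reduce t (w : W) : reducedb t -> R t w = R t (reduce w).
Proof.
move=> Ht; elim: w => //= a w IH.
by rewrite IH -R_step.
Qed.

Lemma R_cat t (u w : W) : R t (u ++ w) = R (R t w) u.
Proof. exact: foldr_cat. Qed.

Lemma reduce_id (w : W) : reducedb w -> reduce w = w.
Proof.
elim: w => // a w IH H; rewrite /= -/(reduce w) IH; last exact: reduced_tail H.
case: w {IH} H => [|b t] //= /andP[H _]; by rewrite (negbTE H).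
Qed.

Lemma wmulA (u v w : W) : reduce (reduce (u ++ v) ++ w) = reduce (u ++ reduce (v ++ w)).
Proof.
have E1 : forall x y : W, reduce (x ++ y) = R (reduce y) x.
  by move=> x y; rewrite reduceE R_cat.
rewrite E1 -R_reduce; last exact: reduce_reduced.
rewrite R_cat -(E1 v w) (E1 u (reduce (v ++ w))) (reduce_id (reduce_reduced _)) //.
Qed.

Lemma wmul1g (u : W) : reducedb u -> reduce ([::] ++ u) = u.
Proof. exact: reduce_id. Qed.
Lemma wmulg1 (u : W) : reducedb u -> reduce (u ++ [::]) = u.
Proof. rewrite cats0; exact: reduce_id. Qed.

Definition winv (u : W) : W := rev (map flipl u).
Lemma wmulE (u w : W) : @gmul (free_group k) u w = reduce (u ++ w). Proof. by []. Qed.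
Lemma goneE : @gone (free_group k) = [::]. Proof. by []. Qed.
Lemma gsetE (u : W) : @gset (free_group k) u = reducedb u. Proof. by []. Qed.
Lemma winvE (u : W) : @ginv (free_group k) u = winv u. Proof. by []. Qed.

Lemma wmulgV (u : W) : reduce (u ++ winv u) = [::].
Proof.
elim: u => // a u IH.
rewrite /winv map_cons rev_cons -cats1 -/(winv u) cat_cons catA /=.
rewrite -/(reduce _) reduceE R_cat R_reduce // -reduceE IH /=.
by rewrite cancels_flip.
Qed.

Lemma winvK (u : W) : winv (winv u) = u.
Proof.
rewrite /winv map_rev revK -map_comp; rewrite -[RHS]map_id; apply: eq_map => a /=.
exact: cancels_flipK.
Qed.

Lemma wmulVg (u : W) : reduce (winv u ++ u) = [::].
Proof. by rewrite -{2}(winvK u) wmulgV. Qed.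

Lemma reduced_inv (u : W) : reducedb u -> reducedb (winv u).
Proof.
rewrite !reducedE /winv rev_sorted sorted_map => H.
apply: sub_sorted H => x y.
case: x y => [i s] [j t]; rewrite /relpre /cancels /flipl /= eq_sym.
by case: s; case: t.
Qed.

Lemma wmulKg (b x : W) : reducedb x -> reduce (b ++ reduce (winv b ++ x)) = x.
Proof. by move=> H; rewrite -wmulA wmulgV wmul1g. Qed.

Section Par.
Variable v : 'I_k -> bool.
Definition par (w : W) := odd (count (fun a : L => v a.1) w).
Lemma par_cons a w : par (a :: w) = v a.1 (+) par w.
Proof. by rewrite /par /= oddD oddb. Qed.
Lemma par_nil : par [::] = false. Proof. by []. Qed.
Lemma par_step a s : par (step a s) = v a.1 (+) par s.
Proof.
case: s => [|b t] /=; first by rewrite par_cons.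
case: ifP => cab; last by rewrite par_cons.
by rewrite par_cons (cancelsP cab) /= addbA addbb.
Qed.
Lemma par_R t w : par (R t w) = par w (+) par t.
Proof. elim: w => [|a w IH] /=; first by []. by rewrite par_step IH par_cons addbA. Qed.
Lemma par_reduce w : par (reduce w) = par w.
Proof. by rewrite reduceE par_R addbF. Qed.
Lemma par_mul u w : par (reduce (u ++ w)) = par u (+) par w.
Proof. by rewrite par_reduce /par count_cat oddD. Qed.
Lemma par_inv u : par (winv u) = par u.
Proof. by rewrite /par /winv count_rev count_map. Qed.
End Par.
End Words.

Section Grp.
Variable k : nat.
Local Notation G := (free_group k).
Local Notation W := (seq (letter k)).
Local Notation mulw u w := (reduce (u ++ w)).

Lemma S_sub : @is_subgroup G (@gset G).
Proof.
split; first by [].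
split; first by [].
split; first by move=> a b _ _; exact: reduce_reduced.
move=> a; exact: reduced_inv.
Qed.

Lemma gen_sub (A H : W -> Prop) : @is_subgroup G H -> subset_of A H -> subset_of (@gen G A) H.
Proof. by move=> sH sA x Hx; apply: Hx. Qed.

Lemma gen_subgroup (A : W -> Prop) : subset_of A (@gset G) -> @is_subgroup G (@gen G A).
Proof.
move=> sA; split; first exact: gen_sub S_sub sA.
split; first by move=> H [_ [H1 _]].
split; first by move=> a b Ha Hb H sH sAH; case: (sH) => [_ [_ [Hm _]]]; apply: (Hm); [apply: Ha|apply: Hb].
by move=> a Ha H sH sAH; case: (sH) => [_ [_ [_ Hi]]]; apply: (Hi); apply: Ha.
Qed.

Lemma derived_sub_le (H : W -> Prop) : @is_subgroup G H -> subset_of (@derived_sub G H) H.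
Proof.
move=> sH; apply: gen_sub => // x [a [b [Ha [Hb ->]]]].
case: (sH) => [_ [_ [Hm Hi]]].
by rewrite /Defs.commg; apply: (Hm); apply: (Hm) => //; apply: (Hi).
Qed.

Lemma derived_subgroup n : @is_subgroup G (@derived G n).
Proof.
elim: n => [|n IH]; first exact: S_sub.
change (@is_subgroup G (@derived_sub G (@derived G n))).
apply: gen_subgroup => x [a [b [Ha [Hb ->]]]].
exact: reduce_reduced.
Qed.

Lemma derived_mono m n : m <= n -> subset_of (@derived G n) (@derived G m).
Proof.
move=> /subnK <-; elim: (n - m) => [|d IH] // x Hx.
apply: IH; rewrite addSn in Hx.
exact: (derived_sub_le (derived_subgroup (d + m)) Hx).
Qed.

Lemma derived_S n : subset_of (@derived G n) (@gset G).
Proof. exact: (derived_mono (leq0n n)). Qed.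

Lemma normal_red (N : W -> Prop) n : @is_normal G N -> N n -> reducedb n.
Proof. by move=> [[sN _] _] /sN. Qed.

Lemma C1 (N : W -> Prop) g : @is_normal G N -> reducedb g -> @lcoset G g N g.
Proof.
move=> [[_ [N1 _]] _] Hg; exists [::]; split => //=.
by rewrite wmulg1.
Qed.

Lemma C2 (N : W -> Prop) g h : @is_normal G N -> reducedb h -> @lcoset G h N g ->
  @lcoset G h N = @lcoset G g N.
Proof.
move=> nN Hh [n0 [Hn0 Eg]]; rewrite /= in Eg.
case: (nN) => [[sN [N1 [Nm Ni]]] _].
apply: functional_extensionality => z; apply: propositional_extensionality; split.
- move=> [m [Hm ->]] /=; exists (mulw (winv n0) m); split.
    by apply: (Nm) => //; apply: (Ni).
  by rewrite wmulE Eg wmulA wmulKg //; apply: sN.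
- move=> [m [Hm ->]] /=; exists (mulw n0 m); split; first by apply: (Nm).
  by rewrite wmulE Eg wmulA.
Qed.

Lemma C3 (N : W -> Prop) a b : @is_normal G N -> reducedb a -> reducedb b ->
  (fun z => exists x y, @lcoset G a N x /\ @lcoset G b N y /\ z = mulw x y) = @lcoset G (mulw a b) N.
Proof.
move=> nN Ha Hb; case: (nN) => [[sN [N1 [Nm Ni]]] Nc].
apply: functional_extensionality => z; apply: propositional_extensionality; split.
- move=> [x [y [[n [Hn ->]] [[m [Hm ->]] ->]]]] /=.
  exists (mulw (mulw (mulw (winv b) n) b) m); split.
    by apply: (Nm) => //; apply: (Nc).
  by rewrite wmulE !wmulA wmulKg //; apply: reduce_reduced.
- move=> [n [Hn ->]]; exists a, (mulw b n); split; first exact: C1.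
  split; first by exists n.
  by rewrite wmulE wmulA.
Qed.

End Grp.

Section PS.
Variable k : nat.
Local Notation G := (free_group k).
Local Notation W := (seq (letter k)).
Local Notation mulw u w := (reduce (u ++ w)).

Definition iotaPS (g : W) : PSel G := fun N z => @soluble_quotient G N /\ @lcoset G g N z.

Lemma iotaPS_sol g N : @soluble_quotient G N -> iotaPS g N = @lcoset G g N.
Proof.
move=> sN; apply: functional_extensionality => z; apply: propositional_extensionality.
by split => [[]|] //.
Qed.

Lemma iotaPS_P g : reducedb g -> PS_carrier (iotaPS g).
Proof.
move=> Hg; split; first by move=> N sN; exists g; split => //; exact: iotaPS_sol.
split.
  move=> N nsN; apply: functional_extensionality => z; apply: propositional_extensionality.
  by split => // [[]].
move=> M N sM sN MN z [_ [m [Hm ->]]]; split => //; exists m; split => //; exact: MN.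
Qed.

Lemma iotaPS_mul g h : reducedb g -> reducedb h ->
  iotaPS (mulw g h) = PS_mul (iotaPS g) (iotaPS h).
Proof.
move=> Hg Hh; apply: functional_extensionality => N; apply: functional_extensionality => z.
apply: propositional_extensionality; split.
- move=> [sN Hz]; rewrite -wmulE -C3 // in Hz; last by case: sN.
  case: Hz => x [y [Hx [Hy ->]]]; exists x, y; do !split => //.
- move=> [x [y [[sN Hx] [[_ Hy] ->]]]]; split => //.
  rewrite -wmulE -C3 //; last by case: sN.
  by exists x, y.
Qed.

Lemma PSmul_P (x y : PSel G) : PS_carrier x -> PS_carrier y -> PS_carrier (PS_mul x y).
Proof.
move=> [x1 [x2 x3]] [y1 [y2 y3]]; split.
  move=> N sN; case: (x1 N sN) => a [Ha Ex]; case: (y1 N sN) => b [Hb Ey].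
  exists (mulw a b); split; first exact: reduce_reduced.
  rewrite /PS_mul Ex Ey -wmulE -C3 //; by case: sN.
split.
  move=> N nsN; apply: functional_extensionality => z; apply: propositional_extensionality.
  split => // [[a [b [Ha _]]]]; by rewrite x2 in Ha.
move=> M N sM sN MN z [a [b [Ha [Hb ->]]]]; exists a, b; split; first exact: x3 Ha.
split => //; exact: y3 Hb.
Qed.

Lemma derived_list (Ls : seq (W -> Prop)) :
  (forall M, List.In M Ls -> @soluble_quotient G M) ->
  exists m, forall M, List.In M Ls -> subset_of (@derived G m) M.
Proof.
elim: Ls => [|M Ls IH] H; first by exists 0.
case: (H M (or_introl erefl)) => _ [n0 Hn0].
case: IH => [N HN|m Hm]; first by apply: H; right.
exists (maxn n0 m) => N [<-|HN] x Hx.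
  by apply: Hn0; apply: (derived_mono (leq_maxl n0 m)).
by apply: (Hm N HN); apply: (derived_mono (leq_maxr n0 m)).
Qed.

Lemma sol_inter (Ls : seq (W -> Prop)) :
  (forall M, List.In M Ls -> @soluble_quotient G M) ->
  @soluble_quotient G (fun z => reducedb z /\ forall M, List.In M Ls -> M z).
Proof.
move=> H; split.
  split.
    split; first by move=> z [].
    split; first by split => // M /H [[[_ [H1 _]] _] _].
    split.
      move=> a b [Ha HA] [Hb HB]; split; first exact: reduce_reduced.
      by move=> M HM; case: (H M HM) => [[[_ [_ [Hm _]]] _] _]; apply: Hm; [apply: HA|apply: HB].
    move=> a [Ha HA]; split; first exact: reduced_inv.
    by move=> M HM; case: (H M HM) => [[[_ [_ [_ Hi]]] _] _]; apply: Hi; apply: HA.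
  move=> g n Hg [Hn HN]; split; first exact: reduce_reduced.
  by move=> M HM; case: (H M HM) => [[_ Hc] _]; apply: Hc => //; apply: HN.
case: (derived_list H) => m Hm; exists m => z Hz; split.
  exact: (derived_S Hz).
by move=> M HM; apply: (Hm M HM).
Qed.

Lemma density (x : PSel G) (Ls : seq (W -> Prop)) : PS_carrier x ->
  (forall M, List.In M Ls -> @soluble_quotient G M) ->
  exists g : W, reducedb g /\ @agree_on G Ls x (iotaPS g).
Proof.
move=> [x1 [x2 x3]] H.
have s0 := sol_inter H.
case: (x1 _ s0) => g [Hg Eg]; exists g; split => // M HM.
have sM := H M HM.
rewrite iotaPS_sol //.
case: (x1 M sM) => h [Hh Eh].
have : x M g.
  apply: (x3 _ _ s0 sM); first by move=> z [_ Hz]; apply: Hz.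
  rewrite Eg; apply: C1 => //; by case: s0.
rewrite Eh => Hgh; apply: C2 => //; by case: sM.
Qed.

Definition pb (P : Prop) : bool := if excluded_middle_informative P then true else false.

Variable v : 'I_k -> bool.
Definition Nv : W -> Prop := fun w => reducedb w /\ par v w = false.

Lemma Nv_sub : @is_subgroup G Nv.
Proof.
split; first by move=> z [].
split; first by [].
split; first by move=> a b [Ha Pa] [Hb Pb]; split; [exact: reduce_reduced| rewrite wmulE par_mul Pa Pb].
by move=> a [Ha Pa]; split; [exact: reduced_inv | rewrite winvE par_inv].
Qed.

Lemma Nv_sol : @soluble_quotient G Nv.
Proof.
split.
  split; first exact: Nv_sub.
  move=> g n Hg [Hn Pn]; split; first exact: reduce_reduced.
  by rewrite !wmulE !par_mul winvE par_inv Pn addbF addbb.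
exists 1 => z; apply: gen_sub; first exact: Nv_sub.
move=> w [a [b [Ha [Hb ->]]]]; split; first exact: reduce_reduced.
by rewrite /Defs.commg !wmulE !par_mul !winvE !par_inv addbb.
Qed.

Lemma pb_val (Q : W -> Prop) c : (exists w, Q w) -> (forall w, Q w -> par v w = c) ->
  pb (exists w, Q w /\ par v w = true) = c.
Proof.
move=> [w0 Hw0] H; rewrite /pb; case: excluded_middle_informative => [[w [Hw Pw]]|nE].
  by rewrite -(H w Hw).
case: c H => H //; case: nE; exists w0; split => //; exact: H.
Qed.

Definition Phi (x : PSel G) := pb (exists w, x Nv w /\ par v w = true).

Lemma Phi_val (x : PSel G) a : PS_carrier x -> x Nv a -> Phi x = par v a.
Proof.
move=> [x1 _] Ha; case: (x1 _ Nv_sol) => c [Hc Ec].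
have Hp : forall w, x Nv w -> par v w = par v c.
  by move=> w; rewrite Ec => [[n [[_ Pn] ->]]]; rewrite wmulE par_mul Pn addbF.
rewrite /Phi (pb_val (c := par v c)); [by rewrite Hp | by exists a | exact: Hp].
Qed.

Lemma Phi_nonempty (x : PSel G) : PS_carrier x -> exists a, x Nv a.
Proof.
move=> [x1 _]; case: (x1 _ Nv_sol) => c [Hc Ec]; exists c; rewrite Ec.
apply: C1 => //; by case: Nv_sol.
Qed.

Lemma Phi_mul (x y : PSel G) : PS_carrier x -> PS_carrier y ->
  Phi (PS_mul x y) = Phi x (+) Phi y.
Proof.
move=> xP yP; rewrite {1}/Phi (pb_val (c := Phi x (+) Phi y)) //.
  case: (Phi_nonempty xP) => a Ha; case: (Phi_nonempty yP) => b Hb.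
  by exists (mulw a b), a, b.
move=> w [a [b [Ha [Hb ->]]]]; rewrite wmulE par_mul.
by rewrite -(Phi_val xP Ha) -(Phi_val yP Hb).
Qed.

Lemma Phi_gen j : Phi (iotaPS [:: (j, true)]) = v j.
Proof.
rewrite (Phi_val (a := [:: (j, true)])).
- by rewrite par_cons par_nil addbF.
- exact: iotaPS_P.
split; first exact: Nv_sol.
apply: C1 => //; by case: Nv_sol.
Qed.

End PS.

Section Main.
Variables k l : nat.
Variable f : PSel (free_group k) -> PSel (free_group l).
Variable g : PSel (free_group l) -> PSel (free_group k).
Hypothesis fP : forall x, PS_carrier x -> PS_carrier (f x).
Hypothesis gP : forall y, PS_carrier y -> PS_carrier (g y).
Hypothesis fg : forall y, PS_carrier y -> f (g y) = y.
Hypothesis fmul : forall x y, PS_carrier x -> PS_carrier y -> f (PS_mul x y) = PS_mul (f x) (f y).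
Hypothesis fcont : PS_continuous f.

Definition psi (v : 'I_l -> bool) x := Phi v (f x).

Lemma psi_mul v (a b : seq (letter k)) : reducedb a -> reducedb b ->
  psi v (iotaPS (reduce (a ++ b))) = psi v (iotaPS a) (+) psi v (iotaPS b).
Proof.
move=> Ha Hb; rewrite /psi iotaPS_mul // fmul; [apply: Phi_mul; exact/fP/iotaPS_P | exact: iotaPS_P | exact: iotaPS_P].
Qed.

Definition U (v : {ffun 'I_l -> bool}) : {ffun 'I_k -> bool} :=
  [ffun i => psi v (iotaPS [:: (i, true)])].

Lemma psi_iota (v : {ffun 'I_l -> bool}) (w : seq (letter k)) : reducedb w -> psi v (iotaPS w) = par (U v) w.
Proof.
have e0 : psi v (iotaPS [::]) = false.
  have := psi_mul v (a := [::]) (b := [::]) erefl erefl.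
  by rewrite /= addbb.
have e1 : forall i b, psi v (iotaPS [:: (i, b)]) = U v i.
  move=> i [|]; first by rewrite ffunE.
  have := psi_mul v (a := [:: (i, false)]) (b := [:: (i, true)]) erefl erefl.
  have -> : reduce ([:: (i, false)] ++ [:: (i, true)]) = [::].
    by rewrite /= /cancels /= eqxx.
  rewrite e0 ffunE.
  by case: (psi v (iotaPS [:: (i, false)])); case: (psi v (iotaPS [:: (i, true)])).
elim: w => [|a w IH] Hw; first by rewrite e0.
have Hw' := reduced_tail Hw.
have -> : iotaPS (a :: w) = iotaPS (reduce ([:: a] ++ w)) by rewrite reduce_id.
rewrite psi_mul // IH // par_cons; case: a {Hw} => i b; by rewrite e1.
Qed.

Lemma psi_agree v w x : PS_carrier x -> exists h : seq (letter k), reducedb h /\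
  psi v x = psi v (iotaPS h) /\ psi w x = psi w (iotaPS h).
Proof.
move=> xP.
case: (fcont xP (Nv_sol v)) => L1 [HL1 E1].
case: (fcont xP (Nv_sol w)) => L2 [HL2 E2].
have Hs : forall M, List.In M (L1 ++ L2) -> @soluble_quotient (free_group k) M.
  by move=> M HM; case: (List.in_app_or _ _ _ HM) => ?; [exact: HL1|exact: HL2].
case: (density xP Hs) => h [Hh Ag].
exists h; split => //.
have hP := iotaPS_P Hh.
split.
- rewrite /psi /Phi E1 // => N HN; apply: Ag; apply: List.in_or_app; by left.
- rewrite /psi /Phi E2 // => N HN; apply: Ag; apply: List.in_or_app; by right.
Qed.

Lemma U_inj : injective U.
Proof.
move=> v w Uvw.
have H : forall x, PS_carrier x -> psi v x = psi w x.
  move=> x xP; case: (psi_agree v w xP) => h [Hh [-> ->]].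
  by rewrite !psi_iota // Uvw.
apply/ffunP => j.
have jP := iotaPS_P (k := l) (g := [:: (j, true)]) erefl.
rewrite -(Phi_gen v j) -(Phi_gen w j) -(fg jP).
exact: H (gP jP).
Qed.

Lemma le_lk : l <= k.
Proof.
have := leq_card U U_inj.
rewrite !card_ffun !card_bool !card_ord leq_exp2l //.
Qed.

End Main.

Theorem mainTheorem7 (k l : nat) :
  2 <= k -> 2 <= l -> k <> l ->
  ~ PS_isomorphic (free_group k) (free_group l).
Proof.
move=> _ _ nkl [f [g [fP [gP [gf [fg [fmul [fc gc]]]]]]]].
have gmul : forall x y, PS_carrier x -> PS_carrier y -> g (PS_mul x y) = PS_mul (g x) (g y).
  move=> x y xP yP.
  have e : PS_mul x y = f (PS_mul (g x) (g y)) by rewrite fmul; [rewrite !fg | exact: gP | exact: gP].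
  by rewrite e gf //; apply: PSmul_P; apply: gP.
have h1 := le_lk fP gP fg fmul fc.
have h2 := le_lk gP fP gf gmul gc.
by apply: nkl; apply/eqP; rewrite eqn_leq h1 h2.
Qed.
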